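(* Let $p\in(1,\infty)$ be such that $\gamma_{p,w}:=\gamma\, n^{1/p}(w_{\max}/w_{\min})^{1/p}<1$, let $Q^*_\lambda$ be the unique fixed point of $F_\lambda$, and let \[\bar\theta:=\arg\min_{\theta\in\mathbb{R}^d}\|Q_\theta-Q^*_\lambda\|_{p,w},\qquad \theta^*_p:=\arg\min_{\theta\in\mathbb{R}^d}f_p(\theta),\] where $f_p(\theta)=\frac1p\|F_\lambda(\Phi\theta)-\Phi\theta\|_{p,w}^p$. Then \[ \|Q_{\bar\theta}-Q_{\theta^*_p}\|_{p,w}\le\left(1+\frac{1+\gamma_{p,w}}{1-\gamma_{p,w}}\right)\min_{\theta\in\mathbb{R}^d}\|Q_\theta-Q^*_\lambda\|_{p,w}. \]
   Context: Finite discounted MDP with state space $\mathcal S$, action space $\mathcal A$, transition probabilities $P(s'\mid s,a)$, expected reward $R(s,a)$, discount $\gamma\in[0,1)$; $n=|\mathcal S||\mathcal A|$ and Q-functions are vectors in $\mathbb{R}^n$ indexed by $(s,a)$. For $\lambda>0$, $(F_\lambda Q)(s,a) := R(s,a)+\gamma\sum_{s'}P(s'\mid s,a)\,\lambda\ln\big(\sum_{u\in\mathcal A}\exp(Q(s',u)/\lambda)\big)$. Weights $w_i>0$ with $\sum_i w_i=1$, $\|x\|_{p,w}=(\sum_i w_i|x_i|^p)^{1/p}$, $w_{\min}=\min_i w_i$, $w_{\max}=\max_i w_i$. $\Phi\in\mathbb{R}^{n\times d}$ is a full-rank feature matrix and $Q_\theta=\Phi\theta$. When $\gamma_{p,w}<1$,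 $F_\lambda$ is a contraction in $\|\cdot\|_{p,w}$ with unique fixed point $Q^*_\lambda$. *)

(* Defs.v *)
From HB Require Import structures.
From mathcomp Require Import all_boot all_order all_algebra.
From mathcomp Require Import all_classical all_reals all_analysis.
Set Implicit Arguments. Unset Strict Implicit. Unset Printing Implicit Defensive.
Import Order.TTheory GRing.Theory Num.Theory.
Local Open Scope ring_scope.

Section MDP.
Variables (R : realType) (S A : finType).

Definition wpnorm (p : R) (w : S * A -> R) (x : S * A -> R) : R :=
  (\sum_i w i * (`|x i| `^ p)) `^ (p^-1).

Definition Fsoft (r : S -> A -> R) (P : S -> A -> S -> R) (gamma lambda : R)
    (Q : S * A -> R) : S * A -> R :=
  fun sa => r sa.1 sa.2 + gamma * \sum_(s' : S) P sa.1 sa.2 s' *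
     (lambda * ln (\sum_(u : A) expR (Q (s', u) / lambda))).

Definition Qlin (d : nat) (Phi : 'M[R]_(#|{: S * A}|, d)) (theta : 'cV[R]_d)
    : S * A -> R :=
  fun sa => (Phi *m theta) (enum_rank sa) 0.

Definition fp (r : S -> A -> R) (P : S -> A -> S -> R) (gamma lambda p : R)
    (w : S * A -> R) (d : nat) (Phi : 'M[R]_(#|{: S * A}|, d))
    (theta : 'cV[R]_d) : R :=
  p^-1 * (wpnorm p w (fun sa => Fsoft r P gamma lambda (Qlin Phi theta) sa
                                - Qlin Phi theta sa)) `^ p.

Definition gamma_pw (gamma p wmin wmax : R) : R :=
  gamma * (#|{: S * A}|%:R `^ (p^-1)) * ((wmax / wmin) `^ (p^-1)).

End MDP.

(* Main.v *)
Require Import Defs.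
From HB Require Import structures.
From mathcomp Require Import all_boot all_order all_algebra.
From mathcomp Require Import all_classical all_reals all_analysis.
From mathcomp Require Import ring lra.
Import Order.TTheory GRing.Theory Num.Theory.
Local Open Scope ring_scope.

Lemma lse_lip (R : realType) (A : finType) (lambda M : R) (f g : A -> R) :
  0 < lambda -> 0 <= M -> (forall u, `|f u - g u| <= M) ->
  lambda * ln (\sum_u expR (f u / lambda)) <=
  M + lambda * ln (\sum_u expR (g u / lambda)).
Proof.
move=> l0 M0 h.
case: (pickP (@predT A)) => [a0 _|none]; last first.
  rewrite !big_pred0 // ln0 ?lexx // mulr0 addr0 //.
have sg : 0 < \sum_u expR (g u / lambda).
  rewrite (bigD1 a0) //= ltr_pwDl ?expR_gt0 //.
  by apply: sumr_ge0 => u _; rewrite ltW // expR_gt0.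
have sf : 0 < \sum_u expR (f u / lambda).
  rewrite (bigD1 a0) //= ltr_pwDl ?expR_gt0 //.
  by apply: sumr_ge0 => u _; rewrite ltW // expR_gt0.
have le1 : \sum_u expR (f u / lambda) <= expR (M / lambda) * \sum_u expR (g u / lambda).
  rewrite mulr_sumr; apply: ler_sum => u _.
  rewrite -expRD ler_expR -mulrDl ler_pM2r ?invr_gt0 //.
  have := h u; rewrite ler_norml => /andP[_ hu].
  by rewrite -lerBlDr.
have le2 := le1; rewrite -ler_ln ?posrE ?mulr_gt0 ?expR_gt0 // in le2.
rewrite lnM ?posrE ?expR_gt0 // expRK in le2.
have -> : M = lambda * (M / lambda) by rewrite mulrC mulfVK // gt_eqF.
rewrite -mulrDr.
by rewrite ler_pM2l.
Qed.

Lemma F_lip (R : realType) (S A : finType) (r : S -> A -> R) (P : S -> A -> S -> R)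
  (gamma lambda M : R) (Q Q' : S * A -> R) :
  (forall s a s', 0 <= P s a s') -> (forall s a, \sum_(s' : S) P s a s' = 1) ->
  0 <= gamma -> 0 < lambda -> 0 <= M -> (forall i, `|Q i - Q' i| <= M) ->
  forall sa, `|Fsoft r P gamma lambda Q sa - Fsoft r P gamma lambda Q' sa| <= gamma * M.
Proof.
move=> P0 P1 g0 l0 M0 h sa.
rewrite /Fsoft.
have -> : forall a b c : R, (a + b) - (a + c) = b - c by move=> *; ring.
rewrite -mulrBr normrM ger0_norm // ler_wpM2l //.
rewrite -sumrB.
apply: le_trans (ler_norm_sum _ _ _) _.
rewrite -[M]mul1r -(P1 sa.1 sa.2) mulr_suml.
apply: ler_sum => s' _.
rewrite -mulrBr normrM ger0_norm // ler_wpM2l //.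
set L := lambda * _; set L' := lambda * _.
have h1 : L <= M + L'.
  apply: lse_lip => // u; exact: h.
have h2 : L' <= M + L.
  apply: lse_lip => // u; rewrite distrC; exact: h.
rewrite ler_norml; apply/andP; split; lra.
Qed.

Lemma convp (R : realType) (p t u v : R): 1<=p -> 0<=t -> t<=1 -> 0<=u -> 0<=v ->
  (t*u + (1-t)*v) `^ p <= t * u`^p + (1-t)*v`^p.
Proof.
move=> p1 t0 t1 u0 v0.
have := @convex_powR R p p1 (Itv01 t0 t1) u v.
rewrite !inE /= !in_itv /= !andbT => /(_ u0 v0).
by rewrite !convRE.
Qed.

Section Norm.
Variables (R : realType) (S A : finType) (p : R) (w : S * A -> R).
Hypothesis p1 : 1 < p.
Hypothesis wpos : forall i, 0 < w i.
Hypothesis wsum : \sum_i w i = 1.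

Let p0 : 0 < p. Proof. exact: lt_trans p1. Qed.
Let pi0 : 0 <= p^-1. Proof. by rewrite invr_ge0 ltW. Qed.

Definition ss (x : S * A -> R) := \sum_i w i * (`|x i| `^ p).
Local Notation N := (wpnorm p w).

Lemma ss_ge0 x : 0 <= ss x.
Proof. by apply: sumr_ge0 => i _; rewrite mulr_ge0 ?powR_ge0 // ltW. Qed.

Lemma NE x : N x = ss x `^ p^-1.
Proof. by []. Qed.

Lemma N_ge0 x : 0 <= N x.
Proof. exact: powR_ge0. Qed.

Lemma powK (c : R) : 0 <= c -> (c `^ p) `^ p^-1 = c.
Proof. by move=> c0; rewrite -powRrM mulfV ?gt_eqF // powRr1. Qed.

Lemma powK' (c : R) : 0 <= c -> (c `^ p^-1) `^ p = c.
Proof. by move=> c0; rewrite -powRrM mulVf ?gt_eqF // powRr1. Qed.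

Lemma Npow x : N x `^ p = ss x.
Proof. by rewrite NE powK' // ss_ge0. Qed.

Lemma N_mono_ss x y : ss x <= ss y -> N x <= N y.
Proof. by move=> h; rewrite !NE ge0_ler_powR // nnegrE ss_ge0. Qed.

Lemma N_eq x y : (forall i, `|x i| = `|y i|) -> N x = N y.
Proof. by move=> h; rewrite !NE /ss; congr (_ `^ _); apply: eq_bigr => i _; rewrite h. Qed.

Lemma N_le x y : (forall i, `|x i| <= `|y i|) -> N x <= N y.
Proof.
move=> h; apply: N_mono_ss; apply: ler_sum => i _.
apply: ler_wpM2l; first exact: ltW.
by apply: (ge0_ler_powR (ltW p0)); rewrite ?nnegrE ?normr_ge0 ?h.
Qed.

Lemma N_const x c : 0 <= c -> (forall i, `|x i| <= c) -> N x <= c.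
Proof.
move=> c0 h; rewrite NE -{1}(powK _ c0) ge0_ler_powR // ?nnegrE ?ss_ge0 ?powR_ge0 //.
rewrite -[c `^ p]mul1r -wsum mulr_suml; apply: ler_sum => i _.
apply: ler_wpM2l; first exact: ltW.
by apply: (ge0_ler_powR (ltW p0)); rewrite ?nnegrE ?normr_ge0 ?h.
Qed.

Lemma N_coord x i wmin : 0 < wmin -> wmin <= w i ->
  `|x i| <= (wmin^-1) `^ p^-1 * N x.
Proof.
move=> wm0 wmi.
have wm0' : 0 <= wmin^-1 by rewrite invr_ge0 ltW.
rewrite NE -powRM ?ss_ge0 //.
rewrite -{1}(powK _ (normr_ge0 (x i))).
apply: (ge0_ler_powR pi0); rewrite ?nnegrE ?powR_ge0 ?mulr_ge0 ?ss_ge0 //.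
rewrite ler_pdivlMl // /ss (bigD1 i) //=.
apply: le_trans (_ : w i * `|x i| `^ p <= _).
  by rewrite ler_wpM2r ?powR_ge0.
rewrite lerDl; apply: sumr_ge0 => j _; rewrite mulr_ge0 ?powR_ge0 //.
exact: ltW.
Qed.

Lemma N_zero x : N x = 0 -> forall i, x i = 0.
Proof.
move=> h i.
have hs : ss x = 0 by rewrite -Npow h powR0 // gt_eqF.
have := (@psumr_eq0P _ _ predT _ (fun j _ => mulr_ge0 (ltW (wpos j)) (powR_ge0 _ _)) hs i isT).
move/eqP; rewrite mulf_eq0 gt_eqF //= => /eqP/powR_eq0_eq0/eqP.
by rewrite normr_eq0 => /eqP.
Qed.

Lemma N_triangle x y : N (fun i => x i + y i) <= N x + N y.
Proof.
move Ea: (N x) => a; move Eb: (N y) => b.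
have a0 : 0 <= a by rewrite -Ea; exact: N_ge0.
have b0 : 0 <= b by rewrite -Eb; exact: N_ge0.
have [az|anz] := eqVneq a 0.
  rewrite az add0r -Eb. apply: (@N_le (fun i => x i + y i) y) => i.
  have h2 : N x = 0 by rewrite Ea.
  have xi := N_zero x h2 i.
  rewrite xi add0r; exact: lexx.
have [bz|bnz] := eqVneq b 0.
  rewrite bz addr0 -Ea. apply: (@N_le (fun i => x i + y i) x) => i.
  have h2 : N y = 0 by rewrite Eb.
  have yi := N_zero y h2 i.
  rewrite yi addr0; exact: lexx.
have ap : 0 < a by rewrite lt_neqAle eq_sym anz.
have bp : 0 < b by rewrite lt_neqAle eq_sym bnz.
have abp : 0 < a + b by rewrite addr_gt0.
move Et: (a / (a + b)) => t.
have t0 : 0 <= t by rewrite -Et divr_ge0 // ltW.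
have t1 : t <= 1 by rewrite -Et ler_pdivrMr // mul1r lerDl.
have t1e : 1 - t = b / (a + b).
  by rewrite -Et; field; exact: (negbT (gt_eqF abp)).
have ha : (a^-1) `^ p * ss x = 1.
  by rewrite -Npow Ea -powRM ?invr_ge0 // mulVf // powR1.
have hb : (b^-1) `^ p * ss y = 1.
  by rewrite -Npow Eb -powRM ?invr_ge0 // mulVf // powR1.
have key : ss (fun i => x i + y i) <= (a + b) `^ p.
  apply: le_trans (_ : \sum_i w i * ((a + b) `^ p *
       (t * (`|x i| / a) `^ p + (1 - t) * (`|y i| / b) `^ p)) <= _).
    apply: ler_sum => i _; apply: ler_wpM2l; first exact: ltW.
    have e : `|x i| + `|y i| = (a + b) * (t * (`|x i| / a) + (1 - t) * (`|y i| / b)).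
      rewrite t1e -Et; field.
      by rewrite !gt_eqF.
    apply: le_trans (_ : (`|x i| + `|y i|) `^ p <= _).
      apply: (ge0_ler_powR (ltW p0)); rewrite ?nnegrE ?addr_ge0 //.
      exact: ler_normD.
    rewrite e powRM; last 2 first.
    - exact: ltW.
    - by rewrite addr_ge0 // mulr_ge0 // ?subr_ge0 // divr_ge0 // ltW.
    rewrite ler_wpM2l ?powR_ge0 //.
    by apply: convp => //; [exact: ltW | rewrite divr_ge0 // ltW..].
  rewrite -[X in _ <= X]mulr1.
  under eq_bigr do rewrite mulrCA.
  rewrite -mulr_sumr ler_wpM2l ?powR_ge0 //.
  under eq_bigr do rewrite mulrDr.
  rewrite big_split /=.
  have ex : \sum_i w i * (`|x i| / a) `^ p = (a^-1) `^ p * ss x.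
    rewrite /ss mulr_sumr; apply: eq_bigr => i _.
    by rewrite powRM ?normr_ge0 ?invr_ge0 // mulrA [LHS]mulrC.
  have ey : \sum_i w i * (`|y i| / b) `^ p = (b^-1) `^ p * ss y.
    rewrite /ss mulr_sumr; apply: eq_bigr => i _.
    by rewrite powRM ?normr_ge0 ?invr_ge0 // mulrA [LHS]mulrC.
  under eq_bigr do rewrite mulrCA.
  rewrite -mulr_sumr ex ha.
  under eq_bigr do rewrite mulrCA.
  by rewrite -mulr_sumr ey hb !mulr1 addrC subrK.
rewrite NE -(powK _ (ltW abp)).
by apply: (ge0_ler_powR pi0); rewrite ?nnegrE ?ss_ge0 ?powR_ge0.
Qed.

Lemma N_contr (r : S -> A -> R) (P : S -> A -> S -> R) (gamma lambda wmin : R)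
  (Q Q' : S * A -> R) :
  (forall s a s', 0 <= P s a s') -> (forall s a, \sum_(s' : S) P s a s' = 1) ->
  0 <= gamma -> 0 < lambda -> 0 < wmin -> (forall i, wmin <= w i) ->
  N (fun sa => Fsoft r P gamma lambda Q sa - Fsoft r P gamma lambda Q' sa)
  <= gamma * (wmin^-1 `^ p^-1) * N (fun sa => Q sa - Q' sa).
Proof.
move=> P0 P1 g0 l0 wm0 wmi.
have C0 : 0 <= wmin^-1 `^ p^-1 * N (fun sa => Q sa - Q' sa).
  by rewrite mulr_ge0 ?powR_ge0 ?N_ge0.
apply: N_const; first by rewrite -mulrA mulr_ge0.
move=> i; rewrite -mulrA; apply: F_lip => // j.
exact: (N_coord (fun sa => Q sa - Q' sa) j wmin wm0 (wmi j)).
Qed.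
End Norm.

Lemma final_arith (R : realType) (g D X E E' Y : R) : g < 1 -> 0 <= D -> 0 <= X ->
  Y <= D + X -> X <= g * X + E -> E <= E' -> E' <= g * D + D ->
  Y <= (1 + (1 + g) / (1 - g)) * D.
Proof.
move=> g1 D0 X0 h1 h2 h3 h4.
have g1' : 0 < 1 - g by rewrite subr_gt0.
have hX : X <= (1 + g) * D / (1 - g).
  rewrite ler_pdivlMr //; nra.
apply: le_trans h1 _.
rewrite mulrDl mul1r lerD2l mulrAC.
exact: hX.
Qed.

Theorem theorem2 (R : realType) (S A : finType) (d : nat)
  (r : S -> A -> R) (P : S -> A -> S -> R) (gamma lambda p : R)
  (w : S * A -> R) (wmin wmax : R)
  (Phi : 'M[R]_(#|{: S * A}|, d))
  (Qstar : S * A -> R) (thetabar thetap : 'cV[R]_d) :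
  (* finite MDP *)
  (forall s a s', 0 <= P s a s') ->
  (forall s a, \sum_(s' : S) P s a s' = 1) ->
  0 <= gamma -> gamma < 1 -> 0 < lambda ->
  (* weights *)
  (forall i, 0 < w i) -> \sum_i w i = 1 ->
  (forall i, wmin <= w i) -> (exists i, w i = wmin) ->
  (forall i, w i <= wmax) -> (exists i, w i = wmax) ->
  (* full-rank features *)
  \rank Phi = d ->
  (* p in (1, oo) with gamma_{p,w} < 1 *)
  1 < p -> gamma_pw S A gamma p wmin wmax < 1 ->
  (* Q*_lambda is the fixed point of F_lambda *)
  Fsoft r P gamma lambda Qstar = Qstar ->
  (* thetabar minimises ||Q_theta - Q*||_{p,w} *)
  (forall theta, wpnorm p w (fun sa => Qlin Phi thetabar sa - Qstar sa)
                 <= wpnorm p w (fun sa => Qlin Phi theta sa - Qstar sa)) ->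
  (* thetap minimises f_p *)
  (forall theta, fp r P gamma lambda p w Phi thetap
                 <= fp r P gamma lambda p w Phi theta) ->
  wpnorm p w (fun sa => Qlin Phi thetabar sa - Qlin Phi thetap sa)
  <= (1 + (1 + gamma_pw S A gamma p wmin wmax)
            / (1 - gamma_pw S A gamma p wmin wmax))
     * wpnorm p w (fun sa => Qlin Phi thetabar sa - Qstar sa).
Proof.
move=> P0 P1 g0 g1 l0 wpos wsum wmin_le [i0 hi0] wmax_ge [i1 hi1] _ p1 gl1 hfix _ hfp.
set g := gamma_pw S A gamma p wmin wmax.
have wm0 : 0 < wmin by rewrite -hi0.
have p0 : 0 < p by exact: lt_trans p1.
have pi0 : 0 <= p^-1 by rewrite invr_ge0 ltW.
have hg : gamma * (wmin^-1 `^ p^-1) <= g.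
  have wM0 : 0 < wmax by rewrite -hi1.
  rewrite /g /gamma_pw -mulrA ler_wpM2l //.
  rewrite -powRM ?ler0n //; last by rewrite divr_ge0 // ltW.
  apply: (ge0_ler_powR pi0).
  - by rewrite nnegrE invr_ge0 ltW.
  - by rewrite nnegrE mulr_ge0 ?ler0n // divr_ge0 // ltW.
  rewrite mulrA ler_pdivlMr // mulVf ?gt_eqF //.
  have : \sum_(i : S * A) w i <= \sum_(i : S * A) wmax by apply: ler_sum => i _.
  by rewrite wsum sumr_const mulr_natl.
have contr : forall Q Q', wpnorm p w (fun sa => Fsoft r P gamma lambda Q sa - Fsoft r P gamma lambda Q' sa)
   <= g * wpnorm p w (fun sa => Q sa - Q' sa).
  move=> Q Q'; apply: le_trans (@N_contr R S A p w p1 wpos wsum r P gamma lambda wmin Q Q' P0 P1 g0 l0 wm0 wmin_le) _.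
  by rewrite ler_wpM2r // N_ge0.
have hf := hfp thetabar.
rewrite /fp ler_pM2l ?invr_gt0 // in hf.
clear hfp.
move: hf; move: (Qlin Phi thetabar) => Qb; move: (Qlin Phi thetap) => Qp => hf.
have h3 : wpnorm p w (fun sa => Fsoft r P gamma lambda Qp sa - Qp sa)
   <= wpnorm p w (fun sa => Fsoft r P gamma lambda Qb sa - Qb sa).
  rewrite leNgt; apply/negP => lt.
  have nE : wpnorm p w (fun sa => Fsoft r P gamma lambda Qp sa - Qp sa) \in Num.nneg.
    rewrite nnegrE; exact: N_ge0.
  have nE' : wpnorm p w (fun sa => Fsoft r P gamma lambda Qb sa - Qb sa) \in Num.nneg.
    rewrite nnegrE; exact: N_ge0.
  have lt' := gt0_ltr_powR p0 nE' nE lt.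
  have := lt_le_trans lt' hf.
  rewrite ltxx; exact: id.
have h1 : wpnorm p w (fun sa => Qb sa - Qp sa) <=
    wpnorm p w (fun sa => Qb sa - Qstar sa) + wpnorm p w (fun sa => Qstar sa - Qp sa).
  rewrite (@N_eq R S A p w _ (fun sa => (Qb sa - Qstar sa) + (Qstar sa - Qp sa))); last first.
    by move=> i; congr `|_|; ring.
  exact: (@N_triangle R S A p w p1 wpos _ _).
have h2 : wpnorm p w (fun sa => Qstar sa - Qp sa) <=
    g * wpnorm p w (fun sa => Qstar sa - Qp sa) +
    wpnorm p w (fun sa => Fsoft r P gamma lambda Qp sa - Qp sa).
  rewrite {1}(@N_eq R S A p w _ (fun sa => (Fsoft r P gamma lambda Qstar sa - Fsoft r P gamma lambda Qp sa)
        + (Fsoft r P gamma lambda Qp sa - Qp sa))); last first.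
    by move=> i; rewrite hfix; congr `|_|; ring.
  apply: le_trans (@N_triangle R S A p w p1 wpos _ _) _.
  rewrite lerD2r; exact: (contr Qstar Qp).
have h4 : wpnorm p w (fun sa => Fsoft r P gamma lambda Qb sa - Qb sa) <=
    g * wpnorm p w (fun sa => Qb sa - Qstar sa) + wpnorm p w (fun sa => Qb sa - Qstar sa).
  rewrite (@N_eq R S A p w _ (fun sa => (Fsoft r P gamma lambda Qb sa - Fsoft r P gamma lambda Qstar sa)
        + (Qstar sa - Qb sa))); last first.
    by move=> i; rewrite hfix; congr `|_|; ring.
  apply: le_trans (@N_triangle R S A p w p1 wpos _ _) _.
  apply: lerD.
    exact: (contr Qb Qstar).
  rewrite le_eqVlt; apply/orP; left; apply/eqP; apply: N_eq => i; exact: distrC.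
apply: (@final_arith R _ _ _ _ _ _ gl1 _ _ h1 h2 h3 h4); exact: N_ge0.
Qed.
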